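(* Let $P$ be the feasible set of the rational mixed-integer program $\min\{c^Tx : Ax\le b,\ \ell\le x\le u,\ x_j\in\mathbb{Z} \text{ for all } j\in I\}$, where $A\in\mathbb{Q}^{m\times n}$, $c\in\mathbb{Q}^n$, $b\in\mathbb{Q}^m$, $\ell,u\in(\mathbb{Q}\cup\{\pm\infty\})^n$, $I\subseteq\{1,\dots,n\}$. Let $\alpha^Tx\le\beta$ be an inequality valid for $P$, let $s\ge 0$ be a scaling factor, and let $U,L\subseteq\{1,\dots,n\}$ be disjoint index sets such that $u_i<\infty$ for all $i\in U$, $\ell_i>-\infty$ for all $i\in L$, and $\alpha_i=0$ for all $i\notin U\cup L$. Then the scaled inequality $$\sum_{i\in U}\overline{s\alpha_i}\,x_i+\sum_{i\in L}\underline{s\alpha_i}\,x_i\;\le\;\overline{s\beta+\sum_{i\in U,\,u_i>0}(\overline{s\alpha_i}-\underline{s\alpha_i})\,u_i+\sum_{i\in L,\,\ell_i<0}(\underline{s\alpha_i}-\overline{s\alpha_i})\,\ell_i}$$ is valid for $P$ and $\mathbb{F}$-representable.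
   Context: An inequality is valid for $P$ if every point of $P$ satisfies it. $\mathbb{F}\subseteq\mathbb{Q}$ denotes a fixed set of floating-point numbers (e.g. IEEE double-precision numbers). For $x\in\mathbb{Q}$, $\overline{x}:=\min\{y\in\mathbb{F}: y>x\}$ and $\underline{x}:=\max\{y\in\mathbb{F}: y<x\}$ (assumed to exist for all numbers occurring). An inequality $a^Tx\le\beta$ is $\mathbb{F}$-representable if $a\in\mathbb{F}^n$ and $\beta\in\mathbb{F}$. *)

(* Defs.v *)
From HB Require Import structures.
From Stdlib Require Import ClassicalEpsilon.
From mathcomp Require Import all_boot all_order all_algebra.
From mathcomp Require Import constructive_ereal.
Set Implicit Arguments. Unset Strict Implicit. Unset Printing Implicit Defensive.
Import Order.TTheory GRing.Theory Num.Theory.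
Local Open Scope ring_scope.

Definition is_up (F : pred rat) (x y : rat) : Prop :=
  [/\ y \in F, x < y & forall z, z \in F -> x < z -> y <= z].
Definition is_down (F : pred rat) (x y : rat) : Prop :=
  [/\ y \in F, y < x & forall z, z \in F -> z < x -> z <= y].

Definition has_up (F : pred rat) (x : rat) : Prop := exists y, is_up F x y.
Definition has_down (F : pred rat) (x : rat) : Prop := exists y, is_down F x y.

(* overline{x} and underline{x}; meaningful when has_up / has_down hold *)
Definition up (F : pred rat) (x : rat) : rat :=
  epsilon (inhabits x) (is_up F x).
Definition down (F : pred rat) (x : rat) : rat :=
  epsilon (inhabits x) (is_down F x).

Definition mip_set (m n : nat) (A : 'M[rat]_(m, n)) (b : 'I_m -> rat)
    (l u : 'I_n -> \bar rat) (I : {set 'I_n}) (x : 'I_n -> rat) : Prop :=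
  [/\ forall k : 'I_m, \sum_(j < n) A k j * x j <= b k,
      forall j : 'I_n, (l j <= (x j)%:E)%E /\ ((x j)%:E <= u j)%E
    & forall j : 'I_n, j \in I -> x j \is a Num.int].

Definition valid (n : nat) (P : ('I_n -> rat) -> Prop) (a : 'I_n -> rat)
    (beta : rat) : Prop :=
  forall x, P x -> \sum_(i < n) a i * x i <= beta.

Definition F_representable (F : pred rat) (n : nat) (a : 'I_n -> rat)
    (beta : rat) : Prop :=
  (forall i, a i \in F) /\ beta \in F.

(* Main.v *)
Require Import Defs.
From mathcomp Require Import all_boot all_order all_algebra.
From mathcomp Require Import constructive_ereal.
From mathcomp Require Import lra.
From Stdlib Require Import ClassicalEpsilon.
Import Order.TTheory GRing.Theory Num.Theory.
Local Open Scope ring_scope.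
Lemma t1 (x sa upv dnv ui : rat) : sa < upv -> dnv < sa -> x <= ui -> 0 < ui ->
  upv * x <= sa*x + (upv - dnv)*ui.
Proof. move=> H1 H2 H3 H4; nra. Qed.
Lemma t2 (x sa upv ui : rat) : sa < upv -> x <= ui -> ui <= 0 ->
  upv * x <= sa*x.
Proof. move=> H1 H2 H3; nra. Qed.
Lemma t3 (x sa upv dnv li : rat) : sa < upv -> dnv < sa -> li <= x -> li < 0 ->
  dnv * x <= sa*x + (dnv - upv)*li.
Proof. move=> H1 H2 H3 H4; nra. Qed.
Lemma t4 (x sa dnv li : rat) : dnv < sa -> li <= x -> 0 <= li ->
  dnv * x <= sa*x.
Proof. move=> H1 H2 H3; nra. Qed.
Lemma up_spec {F x} : has_up F x -> is_up F x (up F x).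
Proof. move=> H; exact: (epsilon_spec _ _ H). Qed.
Lemma down_spec {F x} : has_down F x -> is_down F x (down F x).
Proof. move=> H; exact: (epsilon_spec _ _ H). Qed.

Theorem lemma2 (F : pred rat) (F0 : 0 \in F)
  (m n : nat) (A : 'M[rat]_(m, n)) (b : 'I_m -> rat) (c : 'I_n -> rat)
  (l u : 'I_n -> \bar rat) (I : {set 'I_n})
  (alpha : 'I_n -> rat) (beta s : rat) (U L : {set 'I_n}) :
  valid (mip_set A b l u I) alpha beta ->
  0 <= s ->
  [disjoint U & L] ->
  (forall i, i \in U -> (u i < +oo)%E) ->
  (forall i, i \in L -> (-oo < l i)%E) ->
  (forall i, i \notin U :|: L -> alpha i = 0) ->
  (* the floating-point neighbours of all numbers occurring exist *)
  (forall i, i \in U -> has_up F (s * alpha i)) ->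
  (forall i, i \in U -> (0%:E < u i)%E -> has_down F (s * alpha i)) ->
  (forall i, i \in L -> has_down F (s * alpha i)) ->
  (forall i, i \in L -> (l i < 0%:E)%E -> has_up F (s * alpha i)) ->
  let r := s * beta
     + \sum_(i in U | (0%:E < u i)%E)
          (up F (s * alpha i) - down F (s * alpha i)) * fine (u i)
     + \sum_(i in L | (l i < 0%:E)%E)
          (down F (s * alpha i) - up F (s * alpha i)) * fine (l i) in
  has_up F r ->
  let a := fun i : 'I_n =>
    if i \in U then up F (s * alpha i)
    else if i \in L then down F (s * alpha i) else 0 in
  valid (mip_set A b l u I) a (up F r) /\ F_representable F a (up F r).
Proof.
move=> Hval Hs Hdis HU HL H0 HUup HUdn HLdn HLup r Hr a.
have [HrF Hrlt _] := up_spec Hr.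
split; last first.
  split => //= i; rewrite /a; case: ifP => iU; first by case: (up_spec (HUup i iU)).
  case: ifP => iL //; by case: (down_spec (HLdn i iL)).
rewrite /valid => x Hx; have [_ Hb _] := Hx.
set eU := fun i : 'I_n => if (i \in U) && (0%:E < u i)%E then
   (up F (s * alpha i) - down F (s * alpha i)) * fine (u i) else 0.
set eL := fun i : 'I_n => if (i \in L) && (l i < 0%:E)%E then
   (down F (s * alpha i) - up F (s * alpha i)) * fine (l i) else 0.
have Er : r = s * beta + \sum_i eU i + \sum_i eL i.
  by rewrite /r /eU /eL; congr (_ + _); first congr (_ + _); apply: big_mkcond.
apply: (le_trans _ (ltW Hrlt)); rewrite Er.
apply: (@le_trans _ _ (\sum_i (s * (alpha i * x i) + eU i + eL i))).
  apply: ler_sum => i _.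
  rewrite /a /eU /eL; case: ifP => iU.
    rewrite (disjointFr Hdis iU) /= addr0.
    have [upF upgt _] := up_spec (HUup i iU).
    have [_ Hxu] := Hb i.
    move: (HU i iU) Hxu (HUdn i iU).
    case: (u i) => [ui | |] //= _; rewrite !lee_fin !lte_fin => Hxu Hd.
    have [Hpos|Hneg] := ltP 0 ui.
      have [_ dnlt _] := down_spec (Hd Hpos).
      by rewrite mulrA; apply: t1.
    by rewrite addr0 mulrA; apply: (t2 _ _ _ _ upgt Hxu Hneg).
  case: ifP => iL /=.
    have [dnF dnlt _] := down_spec (HLdn i iL).
    have [Hxl _] := Hb i.
    move: (HL i iL) Hxl (HLup i iL).
    case: (l i) => [li | |] //= _; rewrite !lee_fin !lte_fin => Hxl Hd.
    have [Hpos|Hneg] := leP 0 li.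
      by rewrite !addr0 mulrA; apply: (t4 _ _ _ _ dnlt Hxl Hpos).
    have [_ uplt _] := up_spec (Hd Hneg).
    by rewrite addr0 mulrA; apply: (t3 _ _ _ _ _ uplt dnlt Hxl Hneg).
  by rewrite H0 ?inE ?iU ?iL // !mul0r mulr0 !addr0.
rewrite big_split big_split /= -mulr_sumr.
rewrite lerD2r lerD2r.
by apply: ler_wpM2l => //; apply: Hval.
Qed.
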